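(* Let $d=(d_1,\ldots,d_n)$ be a degree sequence with $\sum_{i} d_i = 2n$. Then $d$ has a bi-unicyclic realization if and only if $d_4 \geq 2$ and $d$ is not the sequence $(2,2,\ldots,2)$ of length $n$ with $n$ odd.
   Context: A degree sequence is a sequence $d=(d_1,\ldots,d_n)$ of integers with $d_i\in\{1,\ldots,n-1\}$ for all $i$, even volume $\sum_i d_i$, and ordered so that $d_1\ge d_2\ge\cdots\ge d_n$. A graph $G$ on vertex set $\{1,\ldots,n\}$ realizes $d$ if $\deg_G(i)=d_i$ for all $i$; all graphs are simple. A graph is bi-unicyclic if it is connected, bipartite, and contains exactly one cycle. *)

(* Defs.v *)
From mathcomp Require Import all_boot.
Set Implicit Arguments. Unset Strict Implicit. Unset Printing Implicit Defensive.

(* A degree sequence d = (d_1,...,d_n), n = size d: entries in {1,...,n-1},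
   even volume, nonincreasing.  d_i is [nth 0 d (i-1)]. *)
Definition degree_sequence (d : seq nat) : Prop :=
  all (fun x => 0 < x < size d) d /\ ~~ odd (sumn d) /\ sorted geq d.

Definition simple_graph n (e : rel 'I_n) : Prop := symmetric e /\ irreflexive e.

Definition deg n (e : rel 'I_n) (i : 'I_n) : nat := #|[set j | e i j]|.

Definition realizes (d : seq nat) (e : rel 'I_(size d)) : Prop :=
  forall i : 'I_(size d), deg e i = nth 0 d i.
Arguments realizes : clear implicits.

Definition connected_graph n (e : rel 'I_n) : Prop := forall i j, connect e i j.

Definition bipartite_graph n (e : rel 'I_n) : Prop :=
  exists c : 'I_n -> bool, forall i j, e i j -> c i != c j.

Definition is_cycle_seq n (e : rel 'I_n) (p : seq 'I_n) : bool :=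
  [&& 2 < size p, uniq p & cycle e p].

(* The edge set of the cycle (identifies rotations/reversals of the same cycle). *)
Definition cycle_edges n (p : seq 'I_n) : {set {set 'I_n}} :=
  [set [set x; next p x] | x in p].

Definition has_unique_cycle n (e : rel 'I_n) : Prop :=
  exists p, is_cycle_seq e p /\
    forall q, is_cycle_seq e q -> cycle_edges q = cycle_edges p.

Definition bi_unicyclic n (e : rel 'I_n) : Prop :=
  [/\ connected_graph e, bipartite_graph e & has_unique_cycle e].

(* Main.v *)
Require Import Defs.
From mathcomp Require Import all_boot zify.
Set Implicit Arguments. Unset Strict Implicit. Unset Printing Implicit Defensive.

Lemma next_neq_prev (T : eqType) (p : seq T) x :
  uniq p -> 2 < size p -> x \in p -> next p x != prev p x.
Proof.
move=> Up Sp /rot_to [i s Hr].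
rewrite -(next_rot i Up) -(prev_rot i Up) Hr.
have: uniq (x :: s) by rewrite -Hr rot_uniq.
have: 2 < size (x :: s) by rewrite -Hr size_rot.
rewrite prev_nth next_nth mem_head.
case: s {Hr} => [|a [|b t]] // _ /andP[xn /andP[an _]].
have -> : index x [:: a, b & t] = (size t).+2.
  by apply/eqP; rewrite -[_.+2]/(size [:: a, b & t]) eqn_leq index_size leqNgt index_mem xn.
rewrite /= eqxx /= (nth_last x (b::t)) /=.
by apply/eqP => E; move: an; rewrite E mem_last.
Qed.

Lemma path_col (T : eqType) (e : rel T) (c : T -> bool) x s :
  (forall x y, e x y -> c x != c y) -> path e x s -> c (last x s) = c x (+) odd (size s).
Proof.
move=> Hc; elim: s x => [|y s IH] x /=; first by rewrite addbF.
case/andP=> exy /IH ->; move: (Hc _ _ exy).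
by case: (c x); case: (c y); case: (odd (size s)).
Qed.

Lemma cycle_even (T : eqType) (e : rel T) (c : T -> bool) p :
  (forall x y, e x y -> c x != c y) -> cycle e p -> ~~ odd (size p).
Proof.
move=> Hc; case: p => // x s /= /(path_col Hc).
rewrite last_rcons size_rcons /=.
by case: (c x); case: (odd (size s)).
Qed.

Lemma nbrs_in_cycle n (e : rel 'I_n) p x :
  symmetric e -> is_cycle_seq e p -> x \in p ->
  [/\ next p x != prev p x, e x (next p x), e x (prev p x),
      next p x \in p & prev p x \in p].
Proof.
move=> se /and3P[Sp Up Cp] xp; split.
- exact: next_neq_prev.
- exact: next_cycle.
- by rewrite se; apply: prev_cycle.
- by rewrite mem_next.
- by rewrite mem_prev.
Qed.

Lemma deg_cycle n (e : rel 'I_n) p x :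
  symmetric e -> is_cycle_seq e p -> x \in p ->
  [set next p x; prev p x] \subset [set j | e x j].
Proof.
move=> se Hp xp; have [_ h1 h2 _ _] := nbrs_in_cycle se Hp xp.
by apply/subsetP => y; rewrite !inE => /orP[] /eqP ->.
Qed.

Lemma forward d (e : rel 'I_(size d)) :
  degree_sequence d -> simple_graph e -> realizes d e -> bi_unicyclic e ->
  2 <= nth 0 d 3 /\ ~ (d = nseq (size d) 2 /\ odd (size d)).
Proof.
move=> [Hall [Hev Hsort]] [se ie] Hr [conn [c Hc] [p [Hp _]]].
have [Sp Up Cp] := and3P Hp.
have Heven := cycle_even Hc Cp.
have S4 : 3 < size p by move: Sp Heven; case: (size p) => [|[|[|[|]]]].
have deg2 : forall x, x \in p -> 2 <= nth 0 d x.
  move=> x xp; rewrite -Hr /deg; have := subset_leq_card (deg_cycle se Hp xp).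
  have [h _ _ _ _] := nbrs_in_cycle se Hp xp.
  by rewrite cards2 h.
split.
  rewrite leqNgt; apply/negP => H3.
  have tr : transitive geq by move=> a b c' /= h1 h2; apply: leq_trans h2 h1.
  have rf : reflexive geq by move=> a /=.
  have sub : {subset map val p <= iota 0 3}.
    move=> v /mapP [x xp ->]; rewrite mem_iota /= add0n.
    rewrite ltnNge; apply/negP => x3.
    have := sorted_leq_nth tr rf 0 Hsort.
    move=> /(_ 3 x); rewrite !inE ltn_ord => /(_ _ isT x3).
    have := deg2 _ xp; rewrite /geq => a b.
    have h : 3 < size d by have := ltn_ord x; lia.
    move: (b h) => /= b'; lia.
  have U' : uniq (map val p) by rewrite (map_inj_uniq val_inj).
  have := uniq_leq_size U' sub.
  by rewrite size_map size_iota => h; move: S4; rewrite ltnNge h.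
move=> [Dd Hodd].
have deg_eq : forall x, deg e x = 2.
  have Hd : forall i, i < size d -> nth 0 d i = 2 by move=> i hi; rewrite Dd nth_nseq hi.
  by move=> x; rewrite Hr Hd.
have closed : forall x y, x \in p -> e x y -> y \in p.
  move=> x y xp exy.
  have [h _ _ h1 h2] := nbrs_in_cycle se Hp xp.
  have : [set next p x; prev p x] == [set j | e x j].
    rewrite eqEcard deg_cycle // cards2 h.
    by have := deg_eq x; rewrite /deg => ->.
  move/eqP => E; have : y \in [set j | e x j] by rewrite inE.
  by rewrite -E !inE => /orP[] /eqP ->.
case: p Sp Up Cp Hp Heven closed S4 deg2 => [//|x0 p'] Sp Up Cp Hp Heven closed _ _.
have allin : forall y, y \in x0 :: p'.
  have cl : forall q w, w \in x0 :: p' -> path e w q -> last w q \in x0 :: p'.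
    elim=> [|z q IH] w wp //= /andP[ewz Hq].
    by apply: IH Hq; apply: closed ewz.
  move=> y; have /connectP [q Hq ->] := conn x0 y.
  by apply: cl Hq; apply: mem_head.
have : size (enum 'I_(size d)) <= size (x0 :: p').
  by apply: uniq_leq_size; [apply: enum_uniq | move=> y _; apply: allin].
have : size (x0 :: p') <= size d.
  by rewrite -(card_uniqP Up) -[X in _ <= X]card_ord max_card.
rewrite size_enum_ord => h1 h2.
have E : size (x0 :: p') = size d by apply/eqP; rewrite eqn_leq h1 h2.
by move: Heven; rewrite E Hodd.
Qed.

Section Back.
Variable d : seq nat.
Hypothesis Hds : degree_sequence d.
Hypothesis Hsum : sumn d = 2 * size d.
Hypothesis H3 : 2 <= nth 0 d 3.
Hypothesis Hn2 : ~ (d = nseq (size d) 2 /\ odd (size d)).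

Local Notation n := (size d).
Definition kk := find (fun x => x < 2) d.
Definition mm := kk - odd kk.

Lemma geq_tr : transitive geq.
Proof. by move=> a b c /= h1 h2; apply: leq_trans h2 h1. Qed.
Lemma geq_rf : reflexive geq.
Proof. by move=> a /=. Qed.

Lemma dmono i j : i <= j -> j < n -> nth 0 d j <= nth 0 d i.
Proof.
move=> ij jn; have [_ [_ Hs]] := Hds.
have := sorted_leq_nth geq_tr geq_rf 0 Hs; move=> /(_ i j).
by rewrite !inE jn (leq_ltn_trans ij jn) => /(_ isT isT ij).
Qed.

Lemma dpos i : i < n -> 0 < nth 0 d i.
Proof.
move=> hi; have [Ha _] := Hds.
by move/allP: Ha => /(_ (nth 0 d i) (mem_nth 0 hi)) /andP[].
Qed.

Lemma k_le_n : kk <= n.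
Proof. exact: find_size. Qed.

Lemma d_big i : i < kk -> 2 <= nth 0 d i.
Proof. by move=> hi; have := before_find 0 hi; rewrite ltnNge => /negbFE. Qed.

Lemma d_leaf i : kk <= i -> i < n -> nth 0 d i = 1.
Proof.
move=> ki hi.
have hk : kk < n by apply: leq_ltn_trans hi.
have : nth 0 d kk < 2 by apply: (@nth_find _ 0 (fun x => x < 2)); by rewrite has_find.
have := dmono ki hi; have := dpos hi; lia.
Qed.

Lemma n3 : 3 < n.
Proof. by rewrite ltnNge; apply/negP => h; move: H3; rewrite nth_default. Qed.

Lemma k4 : 4 <= kk.
Proof.
rewrite leqNgt; apply/negP => h.
have hk : kk < n by have := n3; lia.
have : nth 0 d kk < 2 by apply: (@nth_find _ 0 (fun x => x < 2)); by rewrite has_find.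
have := dmono (i:=kk) (j:=3) _ n3; lia.
Qed.

Lemma sumd_split : \sum_(0 <= i < kk) nth 0 d i = n + kk.
Proof.
have E : sumn d = \sum_(0 <= i < n) nth 0 d i.
  by rewrite sumnE -{1}(mkseq_nth 0 d) /mkseq big_map /index_iota subn0.
move: Hsum; rewrite E (big_cat_nat _ (n:=kk)) //; last exact: k_le_n.
rewrite (eq_big_nat _ _ (m := kk) (F2 := fun=> 1)); last first.
  by move=> i /andP[h1 h2]; rewrite d_leaf.
have := k_le_n; rewrite sum_nat_const_nat muln1 /=; lia.
Qed.

Lemma d0_3 : odd kk -> 3 <= nth 0 d 0.
Proof.
move=> ok; rewrite leqNgt; apply/negP => h.
have all2 : forall i, i < kk -> nth 0 d i = 2.
  move=> i hi; have := d_big hi; have := dmono (leq0n i) (leq_trans hi k_le_n); lia.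
have : \sum_(0 <= i < kk) nth 0 d i = kk * 2.
  by rewrite (eq_big_nat _ _ (F2 := fun=> 2)) ?sum_nat_const_nat ?subn0 // => i /andP[_ /all2].
rewrite sumd_split => hk.
have ekn : kk = n by lia.
apply: Hn2; split; last by rewrite -ekn.
apply: (@eq_from_nth _ 0); first by rewrite size_nseq.
by move=> i hi; rewrite nth_nseq hi all2 // ekn.
Qed.

Lemma m_facts : [/\ 4 <= mm, mm <= kk, ~~ odd mm & kk = mm + odd kk].
Proof.
have k4' := k4; rewrite /mm.
have hk : odd kk <= kk by case: (odd kk); lia.
rewrite oddB // oddb addbb; split => //; last by lia.
case ok: (odd kk); last by lia.
have : kk != 4 by apply/eqP => e; rewrite e in ok.
lia.
exact: leq_subr.
Qed.

Definition sv u := if u < mm then 2 + ((odd kk) && (u == 0)) else 1.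
Definition rr u := nth 0 d u - sv u.
Definition LL := flatten [seq nseq (rr i) i | i <- iota 0 kk].
Definition par v := if v < kk then 0 else nth 0 LL (v - kk).

Lemma sv_le u : u < kk -> sv u <= nth 0 d u.
Proof.
move=> uk; have := d_big uk; rewrite /sv.
case: (u < mm) => //; last by lia.
case ok: (odd kk) => /=; last by lia.
case: eqP => [->|_] /=; last by lia.
by move=> _; apply: d0_3.
Qed.

Lemma sum_sv : \sum_(0 <= i < kk) sv i = 2 * kk.
Proof.
have [m4 mk em km] := m_facts.
have A : \sum_(0 <= i < mm) sv i = 2 * mm + odd kk.
  rewrite (eq_big_nat _ _ (F2 := fun i => 2 + (odd kk && (i == 0)))); last first.
    by move=> i /andP[_ h]; rewrite /sv h.
  rewrite big_split /= sum_nat_const_nat subn0.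
  rewrite big_ltn; last by lia.
  rewrite (eq_big_nat _ _ (F2 := fun=> 0)) ?sum_nat_const_nat /=; last first.
    by move=> i /andP[h _]; case: eqP => [e|]; [rewrite e in h|rewrite andbF].
  by rewrite andbT; lia.
case ok: (odd kk); rewrite ok in km A.
  rewrite km addn1 big_nat_recr //= A /sv ltnn; lia.
by rewrite km /= addn0 A addn0.
Qed.

Lemma sum_cnt_eq (s : seq nat) (f : nat -> nat) u :
  sumn [seq (i == u) * f i | i <- s] = count (pred1 u) s * f u.
Proof.
elim: s => //= i s ->; case: eqP => [->|_] /=; lia.
Qed.

Lemma size_LL : size LL = n - kk.
Proof.
rewrite /LL size_flatten /shape -map_comp.
rewrite (eq_map (g := rr)); last by move=> i /=; rewrite size_nseq.
have := sumd_split; have := sum_sv.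
have : \sum_(0 <= i < kk) (rr i + sv i) = \sum_(0 <= i < kk) nth 0 d i.
  apply: eq_big_nat => i /andP[_ h]; rewrite /rr subnK //; exact: sv_le.
rewrite big_split /= sumnE big_map /index_iota subn0.
lia.
Qed.

Lemma LL_lt v : v \in LL -> v < kk.
Proof.
case/flatten_mapP => i; rewrite mem_iota add0n => /andP[_ h].
by rewrite mem_nseq => /andP[_ /eqP ->].
Qed.

Lemma count_LL u : count (pred1 u) LL = if u < kk then rr u else 0.
Proof.
rewrite /LL count_flatten -map_comp.
rewrite (eq_map (g := fun i => (i == u) * rr i)); last first.
  by move=> i /=; rewrite count_nseq.
rewrite sum_cnt_eq (count_uniq_mem _ (iota_uniq _ _)) mem_iota add0n /=.
by case: (u < kk); rewrite ?mul1n ?mul0n.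
Qed.

Lemma par_lt v : v < n -> par v < kk.
Proof.
move=> vn; rewrite /par; case: (ltnP v kk) => h.
  have := k4; lia.
apply: LL_lt; apply: mem_nth; rewrite size_LL; lia.
Qed.

Definition succ u := if u.+1 == mm then 0 else u.+1.
Definition spred u := if u == 0 then mm.-1 else u.-1.
Definition cyc u v := (u < mm) && (v < mm) && ((v == succ u) || (u == succ v)).
Definition EE u v :=
  cyc u v || ((mm <= u) && (par u == v)) || ((mm <= v) && (par v == u)).

Lemma mm4 : 4 <= mm. Proof. by case: m_facts. Qed.
Lemma mmk : mm <= kk. Proof. by case: m_facts. Qed.
Lemma mmn : mm <= n. Proof. exact: leq_trans mmk k_le_n. Qed.

Lemma succ_lt u : u < mm -> succ u < mm.
Proof. rewrite /succ; have := mm4; case: eqP; lia. Qed.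

Lemma spred_lt u : u < mm -> spred u < mm.
Proof. rewrite /spred; have := mm4; case: eqP; lia. Qed.

Lemma succ_spred u v : u < mm -> v < mm -> (u == succ v) = (v == spred u).
Proof.
rewrite /succ /spred => hu hv; have m4 := mm4.
have [e1|e1] := eqVneq v.+1 mm; have [e2|e2] := eqVneq u 0;
  by apply/idP/idP => /eqP h; apply/eqP; lia.
Qed.

Lemma succ_neq_spred u : u < mm -> succ u != spred u.
Proof.
rewrite /succ /spred => hu; have m4 := mm4.
have [e1|e1] := eqVneq u.+1 mm; have [e2|e2] := eqVneq u 0; apply/eqP; lia.
Qed.

Lemma odd_succ u : u < mm -> odd (succ u) = ~~ odd u.
Proof.
have [_ _ em _] := m_facts.
rewrite /succ => hu; case: eqP => h //=.
by move: em; rewrite -h /= => /negbNE ->.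
Qed.

Lemma cyc_iff u v : u < mm -> v < mm -> cyc u v = (v == succ u) || (v == spred u).
Proof. by move=> hu hv; rewrite /cyc hu hv (succ_spred hu hv). Qed.

Lemma count_or_disj (T : eqType) (a b : pred T) s :
  (forall x, x \in s -> ~~ (a x && b x)) ->
  count (fun x => a x || b x) s = count a s + count b s.
Proof.
elim: s => //= x s IH H.
rewrite IH; last by move=> y ys; apply: H; rewrite inE ys orbT.
have := H x (mem_head _ _).
by case: (a x); case: (b x) => //= _; lia.
Qed.

Lemma C1 u : count (cyc u) (iota 0 n) = (u < mm) * 2.
Proof.
case hu: (u < mm); last first.
  by rewrite (eq_count (a2 := pred0)) ?count_pred0 // => v; rewrite /cyc hu.
rewrite (eq_in_count (a2 := fun v => (v == succ u) || (v == spred u))); last first.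
  move=> v; rewrite mem_iota add0n /= => hv.
  case hvm: (v < mm); first by rewrite cyc_iff.
  rewrite /cyc hvm andbF.
  symmetry; apply/negbTE; apply/norP; split; apply/eqP => e; move: hvm;
  by rewrite e ?succ_lt ?spred_lt.
rewrite count_or_disj; last first.
  move=> v _; apply/negP => /andP[/eqP -> /eqP e].
  by move: (succ_neq_spred hu); rewrite e eqxx.
have hn := mmn.
rewrite !(count_uniq_mem _ (iota_uniq _ _)) !mem_iota /= !add0n.
by rewrite (leq_trans (succ_lt hu) hn) (leq_trans (spred_lt hu) hn).
Qed.

Lemma C2 u : u < n -> count (fun v => (mm <= u) && (par u == v)) (iota 0 n) = (mm <= u).
Proof.
move=> un; case hu: (mm <= u); last first.
  by rewrite (eq_count (a2 := pred0)) ?count_pred0.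
rewrite (eq_count (a2 := pred1 (par u))); last by move=> v /=; rewrite eq_sym.
rewrite (count_uniq_mem _ (iota_uniq _ _)) mem_iota add0n /=.
by rewrite (leq_trans (par_lt un) k_le_n).
Qed.

Lemma map_nth_iota (s : seq nat) a :
  map (fun v => nth 0 s (v - a)) (iota a (size s)) = s.
Proof.
have -> : iota a (size s) = map (addn a) (iota 0 (size s)) by rewrite -iotaDl addn0.
rewrite -map_comp (eq_map (g := nth 0 s)); first exact: mkseq_nth.
by move=> x /=; rewrite addKn.
Qed.

Lemma C3 u : count (fun v => (mm <= v) && (par v == u)) (iota 0 n)
           = (odd kk && (u == 0)) + count (pred1 u) LL.
Proof.
have [m4 mk em km] := m_facts.
have kn := k_le_n.
have -> : iota 0 n = iota 0 mm ++ iota mm (odd kk) ++ iota kk (n - kk).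
  rewrite {1}(_ : n = mm + (odd kk + (n - kk))); last lia.
  by rewrite iotaD iotaD add0n -km.
rewrite !count_cat.
rewrite (eq_in_count (a1 := fun v => _ && _) (a2 := pred0)) ?count_pred0; last first.
  by move=> v; rewrite mem_iota add0n /= => h; rewrite leqNgt h.
rewrite add0n; congr addn.
  case ok: (odd kk) => //=.
  rewrite leqnn /= /par.
  have -> : mm < kk by lia.
  by rewrite eq_sym addn0.
rewrite -size_LL -[in RHS](map_nth_iota LL kk) count_map.
apply: eq_in_count => v; rewrite mem_iota => /andP[h1 h2] /=.
rewrite /par ltnNge h1 /=.
by have -> : mm <= v by lia.
Qed.

Lemma EE_count u : u < n -> count (EE u) (iota 0 n) = nth 0 d u.
Proof.
move=> un; have m4 := mm4; have mk := mmk.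
rewrite /EE (count_or_disj (a := fun v => cyc u v || ((mm <= u) && (par u == v)))); last first.
  move=> v; rewrite mem_iota add0n /= => vn; apply/negP => /andP[/orP[]].
    by rewrite /cyc => /andP[/andP[_ h] _] /andP[h' _]; move: h h'; lia.
  move=> /andP[h1 /eqP h2] /andP[h3 /eqP h4].
  have := par_lt un; rewrite h2 => vk.
  by move: h4; rewrite /par vk => h0; move: h1; rewrite -h0; lia.
rewrite count_or_disj; last first.
  by move=> v _; apply/negP => /andP[]; rewrite /cyc => /andP[/andP[h _] _] /andP[h' _]; lia.
rewrite C1 C2 // C3 count_LL.
case: (ltnP u mm) => h1.
  have := sv_le (leq_trans h1 mk); rewrite /rr /sv h1 (leq_trans h1 mk).
  case: (odd kk && (u == 0)) => /=; lia.
case: (ltnP u kk) => h2.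
  have := sv_le h2; rewrite /rr /sv ltnNge h1 /=.
  have -> : (u == 0) = false by apply/eqP; lia.
  rewrite andbF /=; lia.
rewrite d_leaf //.
have -> : (u == 0) = false by apply/eqP; lia.
by rewrite andbF.
Qed.

Lemma card_count N (P : pred nat) : #|[set j : 'I_N | P j]| = count P (iota 0 N).
Proof.
by rewrite cardsE cardE /enum_mem size_filter -val_enum_ord count_map enumT.
Qed.

Definition ee : rel 'I_n := fun x y => EE x y.

Lemma EE_sym u v : EE u v = EE v u.
Proof.
rewrite /EE /cyc.
case: (u < mm); case: (v < mm); case: (v == succ u); case: (u == succ v);
case: ((mm <= u) && (par u == v)); case: ((mm <= v) && (par v == u)) => //.
Qed.

Lemma EE_irr u : u < n -> EE u u = false.
Proof.
move=> un; rewrite /EE -orbA orbb /cyc.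
have m4 := mm4; have pk := par_lt un.
apply/negP => /orP[/andP[/andP[h _]] | /andP[h /eqP]].
  by rewrite orbb /succ; case: ifP => [/eqP e1|e1] /eqP; lia.
move=> e; move: pk; rewrite e => uk; move: e; rewrite /par uk => e0; lia.
Qed.

Lemma ee_simple : simple_graph ee.
Proof.
split; first by move=> x y; rewrite /ee EE_sym.
by move=> x; rewrite /ee EE_irr.
Qed.

Lemma ee_realizes : realizes d ee.
Proof.
move=> i; rewrite /deg /ee (@card_count _ (EE i)).
exact: EE_count.
Qed.

Lemma n0 : 0 < n. Proof. by have := n3; lia. Qed.

Lemma conn_edge a b (ha : a < n) (hb : b < n) :
  EE a b -> connect ee (Ordinal ha) (Ordinal hb).
Proof. by move=> h; apply: connect1. Qed.

Lemma conn_k a (ha : a < n) : a < kk -> connect ee (Ordinal ha) (Ordinal n0).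
Proof.
have m4 := mm4.
case: (ltnP a mm) => h1 h2.
  elim: a ha h1 h2 => [|a IH] ha h1 h2.
    by rewrite (_ : Ordinal ha = Ordinal n0) //; apply: val_inj.
  have ha' : a < n by lia.
  apply: connect_trans (IH ha' _ _); try lia.
  apply: conn_edge; rewrite /EE /cyc h1 /succ.
  have -> : (a < mm) by lia.
  by rewrite (_ : (a.+1 == mm) = false) ?eqxx ?orbT //; apply/eqP; lia.
apply: conn_edge; rewrite /EE h1 /par h2 eqxx /=.
by rewrite orbT.
Qed.

Lemma conn0 a (ha : a < n) : connect ee (Ordinal ha) (Ordinal n0).
Proof.
case: (ltnP a kk) => h; first exact: conn_k.
have pk := par_lt ha.
have hp : par a < n by have := k_le_n; lia.
apply: connect_trans (conn_k hp pk).
apply: conn_edge; rewrite /EE eqxx.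
by rewrite (_ : mm <= a) ?orbT //; have := mmk; lia.
Qed.

Lemma ee_connected : connected_graph ee.
Proof.
move=> x y.
have sy : connect_sym ee.
  by apply: sym_connect_sym => u v; rewrite /ee EE_sym.
have hx := conn0 (ltn_ord x); have hy := conn0 (ltn_ord y).
rewrite (_ : x = Ordinal (ltn_ord x)); last by apply: val_inj.
rewrite (_ : y = Ordinal (ltn_ord y)); last by apply: val_inj.
by apply: connect_trans hx _; rewrite sy.
Qed.

Definition colb v := if v < mm then odd v else true.
Definition col v := if v < kk then colb v else ~~ colb (par v).

Lemma par_edge u : mm <= u -> u < n -> col u != col (par u).
Proof.
move=> h1 h2; have pk := par_lt h2; have m4 := mm4.
rewrite /col pk /colb; case: (ltnP u kk) => h3.
  by rewrite ltnNge h1 /par h3 (_ : 0 < mm) //; lia.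
by case: (par u < mm); case: (odd (par u)).
Qed.

Lemma ee_bip : bipartite_graph ee.
Proof.
exists (fun x => col x) => x y; rewrite /ee /EE.
have mk := mmk.
case/orP => [/orP[]|].
- rewrite /cyc => /andP[/andP[hx hy] /orP[] /eqP ->].
    rewrite /col (leq_trans (succ_lt hx) mk) (leq_trans hx mk) /colb succ_lt // hx.
    by rewrite odd_succ //; case: (odd x).
  rewrite /col (leq_trans (succ_lt hy) mk) (leq_trans hy mk) /colb succ_lt // hy.
  by rewrite odd_succ //; case: (odd y).
- by move=> /andP[h /eqP <-]; apply: par_edge.
- by move=> /andP[h /eqP <-]; rewrite eq_sym; apply: par_edge.
Qed.

Definition pp : seq 'I_n := [seq x <- enum 'I_n | val x < mm].

Lemma val_pp : map val pp = iota 0 mm.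
Proof.
rewrite /pp -[filter _ _]/(filter (preim val (fun v => v < mm)) (enum 'I_n)) -filter_map val_enum_ord.
rewrite {1}(_ : n = mm + (n - mm)); last by have := mmn; lia.
rewrite iotaD filter_cat add0n.
rewrite (eq_in_filter (a2 := predT)) ?filter_predT; last first.
  by move=> v; rewrite mem_iota.
rewrite (eq_in_filter (a2 := pred0)) ?filter_pred0 ?cats0 //.
by move=> v; rewrite mem_iota => /andP[h _] /=; rewrite ltnNge h.
Qed.

Lemma last_iota' l a : last a (iota a.+1 l) = a + l.
Proof. by elim: l a => [|l IH] a /=; [lia | rewrite IH; lia]. Qed.

Lemma path_iota a l : a + l < mm -> path EE a (iota a.+1 l).
Proof.
elim: l a => //= l IH a h; rewrite IH; last by lia.
rewrite andbT /EE /cyc /succ.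
have -> : a < mm by lia.
have -> : a.+1 < mm by lia.
by rewrite (_ : (a.+1 == mm) = false) ?eqxx //; apply/eqP; lia.
Qed.

Lemma pp_cycle : is_cycle_seq ee pp.
Proof.
have m4 := mm4.
apply/and3P; split.
- by rewrite -(size_map val) val_pp size_iota; lia.
- by apply: filter_uniq; apply: enum_uniq.
rewrite /ee -[cycle _ pp]/(cycle (relpre val EE) pp) -cycle_map val_pp.
have [m' em] : exists m', mm = m'.+1 by exists mm.-1; lia.
rewrite em /= rcons_path path_iota; last by lia.
rewrite last_iota' /EE /cyc /succ add0n.
have -> : m' < mm by lia.
by rewrite em ltn0Sn eqxx.
Qed.

Lemma ee_sym : symmetric ee.
Proof. by move=> x y; rewrite /ee EE_sym. Qed.

Lemma nbr_leaf (x y : 'I_n) : kk <= x -> ee x y -> val y = par x.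
Proof.
move=> h; have mk := mmk; rewrite /ee /EE /cyc.
rewrite (_ : x < mm = false) /=; last by apply/negbTE; rewrite -leqNgt; lia.
rewrite (_ : mm <= x) /=; last by lia.
case/orP => [/eqP -> //| /andP[_ /eqP e]].
by have := par_lt (ltn_ord y); rewrite e; lia.
Qed.

Lemma nbr_mid (x y : 'I_n) : mm <= x -> x < kk -> ee x y -> val y = 0 \/ kk <= y.
Proof.
move=> h1 h2; have m4 := mm4; rewrite /ee /EE /cyc.
rewrite (_ : x < mm = false) /=; last by apply/negbTE; rewrite -leqNgt.
rewrite h1 /par h2 /=.
case/orP => [/eqP <-|/andP[_]]; first by left.
by case: ltnP => // _ /eqP e; lia.
Qed.

Lemma nbr_cyc (x y : 'I_n) : x < mm -> y < mm -> ee x y = cyc x y.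
Proof.
move=> h1 h2; rewrite /ee /EE.
have -> : (mm <= x) = false by apply/negbTE; rewrite -ltnNge.
have -> : (mm <= y) = false by apply/negbTE; rewrite -ltnNge.
by rewrite !andFb !orbF.
Qed.

Section Q.
Variable q : seq 'I_n.
Hypothesis Hq : is_cycle_seq ee q.

Lemma q_nleaf x : x \in q -> x < kk.
Proof.
move=> xq; rewrite ltnNge; apply/negP => h.
have [ne h1 h2 _ _] := nbrs_in_cycle ee_sym Hq xq.
move: ne; rewrite (_ : next q x = prev q x) ?eqxx //.
by apply: val_inj; rewrite (nbr_leaf h h1) (nbr_leaf h h2).
Qed.

Lemma q_cyc x : x \in q -> x < mm.
Proof.
move=> xq; rewrite ltnNge; apply/negP => h.
have xk := q_nleaf xq.
have [ne h1 h2 a1 a2] := nbrs_in_cycle ee_sym Hq xq.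
have := q_nleaf a1; have := q_nleaf a2.
have := nbr_mid h xk h1; have := nbr_mid h xk h2.
move=> [e2|e2] [e1|e1] k2 k1; try lia.
by move: ne; rewrite (_ : next q x = prev q x) ?eqxx //; apply: val_inj; rewrite e1 e2.
Qed.

Lemma q_nbr x (y : 'I_n) : x \in q -> y < mm -> ee x y -> y = next q x \/ y = prev q x.
Proof.
move=> xq ym exy.
have [ne h1 h2 a1 a2] := nbrs_in_cycle ee_sym Hq xq.
have xm := q_cyc xq; have am := q_cyc a1; have bm := q_cyc a2.
move: exy h1 h2; rewrite !nbr_cyc // !cyc_iff //.
have := succ_neq_spred xm.
move=> /eqP hne /orP[] /eqP hy /orP[] /eqP ha /orP[] /eqP hb;
  try (by left; apply: ord_inj; lia); try (by right; apply: ord_inj; lia);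
  by move: ne; rewrite (_ : next q x = prev q x) ?eqxx //; apply: ord_inj; lia.
Qed.

Lemma q_closed v : v \in map val q -> (succ v \in map val q) /\ (spred v \in map val q).
Proof.
case/mapP => x xq ->; have xm := q_cyc xq; have hn := mmn.
have hs : succ x < n by have := succ_lt xm; lia.
have hp : spred x < n by have := spred_lt xm; lia.
have inq : forall y : 'I_n, y < mm -> ee x y -> val y \in map val q.
  move=> y ym exy; apply: map_f.
  by case: (q_nbr xq ym exy) => ->; rewrite ?mem_next ?mem_prev.
split.
  apply: (inq (Ordinal hs)); first exact: succ_lt.
  by rewrite nbr_cyc ?succ_lt // cyc_iff ?succ_lt //= eqxx.
apply: (inq (Ordinal hp)); first exact: spred_lt.
by rewrite nbr_cyc ?spred_lt // cyc_iff ?spred_lt //= eqxx orbT.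
Qed.

Lemma q_cover v : v < mm -> v \in map val q.
Proof.
have [S _ _] := and3P Hq.
set x0 := nth (Ordinal n0) q 0.
have x0q : x0 \in q by apply: mem_nth; apply: leq_trans S.
have down : forall j, j <= val x0 -> (val x0 - j) \in map val q.
  elim=> [|j IH] hj; first by rewrite subn0 map_f.
  have [_ h] := q_closed (IH (ltnW hj)).
  move: h; rewrite /spred (_ : (val x0 - j == 0) = false); last by apply/eqP; lia.
  by rewrite (_ : (val x0 - j).-1 = val x0 - j.+1) //; lia.
elim: v => [|v IH] hv; first by have := down _ (leqnn (val x0)); rewrite subnn.
have [h _] := q_closed (IH (ltnW hv)).
by move: h; rewrite /succ (_ : (v.+1 == mm) = false) //; apply/eqP; lia.
Qed.
End Q.

Definition Fset : {set {set 'I_n}} :=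
  [set s : {set 'I_n} | [exists x : 'I_n, [exists y : 'I_n,
     [&& val x < mm, val y < mm, ee x y & s == [set x; y]]]]].

Lemma edges_q q : is_cycle_seq ee q -> cycle_edges q = Fset.
Proof.
move=> Hq; have [_ Uq Cq] := and3P Hq.
apply/setP => s; rewrite /cycle_edges /Fset inE; apply/imsetP/existsP.
  case=> x xq ->; exists x; apply/existsP; exists (next q x).
  rewrite (q_cyc Hq xq) (q_cyc Hq (x:=next q x)) ?mem_next // eqxx andbT /=.
  exact: next_cycle.
case=> x /existsP [y /and4P [hx hy exy /eqP ->]].
have xq : x \in q.
  by have /mapP [x' x'q /val_inj ->] := q_cover Hq hx.
case: (q_nbr Hq xq hy exy) => ->; first by exists x.
exists (prev q x); first by rewrite mem_prev.
by rewrite (next_prev Uq) setUC.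
Qed.

Lemma ee_unique : has_unique_cycle ee.
Proof.
exists pp; split; first exact: pp_cycle.
by move=> q Hq; rewrite !edges_q //; apply: pp_cycle.
Qed.

Lemma backward : exists e : rel 'I_(size d),
       simple_graph e /\ realizes d e /\ bi_unicyclic e.
Proof.
exists ee; split; first exact: ee_simple.
split; first exact: ee_realizes.
split; [exact: ee_connected | exact: ee_bip | exact: ee_unique].
Qed.
End Back.

Unset Implicit Arguments.
Theorem theorem3p6 (d : seq nat) :
  degree_sequence d -> sumn d = 2 * size d ->
  ((exists e : rel 'I_(size d),
       simple_graph e /\ realizes d e /\ bi_unicyclic e)
   <->
   (2 <= nth 0 d 3 /\ ~ (d = nseq (size d) 2 /\ odd (size d)))).
Proof.
move=> Hds Hsum; split.
  by case=> e [Hs [Hr Hb]]; apply: forward Hr Hb.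
by case=> H3 Hn2; apply: backward.
Qed.
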